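(* Let $\mathsf U$ be a pseudovariety and $\mathsf V$ a subpseudovariety of $\mathsf U$. Suppose that $\mathsf V=[\![\Sigma]\!]_{\mathsf U}$ for some set $\Sigma$ of $\mathsf U$-pseudoidentities which is h-strong within $\mathsf U$ and each of whose members is t-strong within $\mathsf U$. Let $\Gamma$ be a set of $\mathsf U$-pseudoidentities such that $[\![\Gamma]\!]_{\mathsf U}\subseteq\mathsf V$. If the set $\Gamma'=\{\pi(u)=\pi(v):(u=v)\in\Gamma\}$ is h-strong within $\mathsf V$, then $\Gamma$ is h-strong within $\mathsf U$.
   Context: A pseudovariety is a nonempty class of finite algebras of a fixed finite type closed under homomorphic images, subalgebras and finite direct products. $\Omega_A\mathsf U$ is the free pro-$\mathsf U$ algebra on the finite set $A$; for $\mathsf V\subseteq\mathsf U$, $\pi=\pi_A:\Omega_A\mathsf U\to\Omega_A\mathsf V$ denotes the natural continuous homomorphism fixing the generators (for each finite $A$). A $\mathsf U$-pseudoidentity is $u=v$ with $u,v\in\Omega_B\mathsf U$, $B$ finite; it holds in $T\in\mathsf U$ if both sides agree under every continuous homomorphism $\Omega_B\mathsf U\to T$; $[\![\Gamma]\!]_{\mathsf U}$ is the class of members of $\mathsf U$ satisfying $\Gamma$. Provability (relative to an ambient pseudovariety $\mathsf W$, here $\mathsf U$ or $\mathsf V$): for a set $\Gamma$ of $\mathsf W$-pseudoidentities and finite $A$, $\Gamma_0\subseteq\Omega_A\mathsf W\times\Omega_A\mathsf W$ is the set of pairs $(\mathbf t(\varphi(u),w_1,\dots,w_n),\mathbf t(\varphi(v),w_1,\dots,w_n))$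 with $u=v$ or $v=u$ in $\Gamma$ ($u,v\in\Omega_B\mathsf W$), $\varphi:\Omega_B\mathsf W\to\Omega_A\mathsf W$ a continuous homomorphism, $\mathbf t$ a term, $w_i\in\Omega_A\mathsf W$; $\Gamma_{2\alpha+1}$ is the transitive closure of $\Gamma_{2\alpha}$; $\Gamma_{2\alpha+2}$ the topological closure of $\Gamma_{2\alpha+1}$; unions at limit ordinals; $u=v$ is provable from $\Gamma$ if $(u,v)\in\bigcup_\alpha\Gamma_\alpha$. A set $\Gamma$ of $\mathsf W$-pseudoidentities is h-strong within $\mathsf W$ if every $\mathsf W$-pseudoidentity valid in $[\![\Gamma]\!]_{\mathsf W}$ is provable from $\Gamma$. A $\mathsf W$-pseudoidentity $\varepsilon$ is t-strong within $\mathsf W$ if $\varepsilon$ is provable from every set $\Gamma$ of $\mathsf W$-pseudoidentities such that $[\![\Gamma]\!]_{\mathsf W}$ satisfies $\varepsilon$. *)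

(* Defs.v *)
From Stdlib Require Import FunctionalExtensionality List.
From mathcomp Require Import all_boot.

Set Implicit Arguments.
Unset Strict Implicit.
Unset Printing Implicit Defensive.

Record signature := Signature { symb : finType; arity : symb -> nat }.

Section Defs.
Variable L : signature.

Record alg := Alg {
  carrier :> finType;
  aop : forall o : symb L, ('I_(arity o) -> carrier) -> carrier }.

Definition ophom (X Y : Type)
  (opX : forall o : symb L, ('I_(arity o) -> X) -> X)
  (opY : forall o : symb L, ('I_(arity o) -> Y) -> Y) (h : X -> Y) :=
  forall o (x : 'I_(arity o) -> X), h (opX o x) = opY o (h \o x).

Definition is_hom (S T : alg) (h : S -> T) := ophom (@aop S) (@aop T) h.

Inductive term := Var of nat | App (o : symb L) of ('I_(arity o) -> term).

Fixpoint teval (X : Type) (opX : forall o : symb L, ('I_(arity o) -> X) -> X)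
  (env : nat -> X) (t : term) : X :=
  match t with
  | Var i => env i
  | App o ts => opX o (fun i => teval opX env (ts i))
  end.

Definition aclass := alg -> Prop.

Definition prod_alg (S T : alg) : alg :=
  @Alg (S * T)%type
    (fun o x => (aop (fun i => (x i).1), aop (fun i => (x i).2))).

Definition unit_alg : alg := @Alg unit (fun _ _ => tt).

(* pseudovariety: nonempty, closed under H, S, and finite direct products
   (binary products and the empty product = trivial algebra) *)
Definition pseudovariety (P : aclass) : Prop :=
  [/\ (exists S, P S),
      (forall (S T : alg) (h : S -> T), is_hom h -> (forall y, exists x, h x = y) ->
          P S -> P T),
      (forall (S T : alg) (h : T -> S), is_hom h -> injective h -> P S -> P T),
      (forall S T, P S -> P T -> P (prod_alg S T)) &
      P unit_alg].

(* The free pro-U algebra on A, realized as the algebra of A-ary implicit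
   operations on U: families (w_S(f))_{S in U, f : A -> S} natural w.r.t.
   homomorphisms between members of U. *)
Section Free.
Variables (U : aclass) (A : finType).

Definition natural (w : forall S : alg, U S -> (A -> S) -> S) :=
  forall (S T : alg) (hS : U S) (hT : U T) (h : S -> T), is_hom h ->
    forall f : A -> S, h (w S hS f) = w T hT (h \o f).

Record free := Free { fam : forall S : alg, U S -> (A -> S) -> S;
                      famP : natural fam }.

Definition freeop_fam o (ws : 'I_(arity o) -> free) :
  forall S : alg, U S -> (A -> S) -> S :=
  fun S hS f => @aop S o (fun i => fam (ws i) hS f).

Lemma freeop_nat o (ws : 'I_(arity o) -> free) : natural (freeop_fam ws).
Proof.
move=> S T hS hT h hh f; rewrite /freeop_fam hh; congr aop.
apply: functional_extensionality => i /=; exact: famP.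
Qed.

Definition freeop o (ws : 'I_(arity o) -> free) : free :=
  Free (freeop_nat ws).

(* Topology: product topology, with basic neighbourhoods given by finitely
   many "tests" (S in U, f : A -> S), each evaluated into the discrete S. *)
Record test := Test { tS : alg; tU : U tS; tf : A -> tS }.

Definition tval (w : free) (t : test) : tS t := fam w (tU t) (tf t).

Definition agree (F : list test) (w w' : free) :=
  forall t, Stdlib.Lists.List.In t F -> tval w' t = tval w t.

End Free.

Definition cont_free (U : aclass) (B A : finType) (phi : free U B -> free U A) :=
  forall (w : free U B) (t : test U A), exists F : list (test U B),
    forall w', agree F w w' -> tval (phi w') t = tval (phi w) t.

Definition cont_alg (U : aclass) (B : finType) (T : alg) (g : free U B -> T) :=
  forall w : free U B, exists F : list (test U B),
    forall w', agree F w w' -> g w' = g w.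

Definition closure (U : aclass) (A : finType) (R : free U A -> free U A -> Prop)
  (u v : free U A) :=
  forall F : list (test U A), exists u' v', R u' v' /\ agree F u u' /\ agree F v v'.

Definition pset (U : aclass) := forall B : finType, free U B -> free U B -> Prop.

Definition ecase (X : Type) (x : X) (w : nat -> X) (i : nat) : X :=
  match i with 0 => x | j.+1 => w j end.

Definition gamma0 (U : aclass) (G : pset U) (A : finType) (p q : free U A) :=
  exists (B : finType) (u v : free U B), (G B u v \/ G B v u) /\
  exists phi : free U B -> free U A,
    ophom (@freeop U B) (@freeop U A) phi /\ cont_free phi /\
    exists (t : term) (w : nat -> free U A),
      p = teval (@freeop U A) (ecase (phi u) w) t /\
      q = teval (@freeop U A) (ecase (phi v) w) t.

(* provable = member of the union of the transfinite sequence Gamma_alpha,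
   i.e. of the least relation containing Gamma_0 that is transitive and
   topologically closed *)
Definition provable (U : aclass) (G : pset U) (A : finType) (u v : free U A) :=
  forall R : free U A -> free U A -> Prop,
    (forall p q, gamma0 G p q -> R p q) ->
    (forall p q r, R p q -> R q r -> R p r) ->
    (forall p q, closure R p q -> R p q) ->
    R u v.

Definition sat (U : aclass) (B : finType) (T : alg) (u v : free U B) :=
  forall g : free U B -> T, ophom (@freeop U B) (@aop T) g -> cont_alg g ->
    g u = g v.

Definition models (U : aclass) (G : pset U) (T : alg) :=
  forall B (u v : free U B), G B u v -> sat T u v.

Definition h_strong (U : aclass) (G : pset U) :=
  forall (B : finType) (u v : free U B),
    (forall T, U T -> models G T -> sat T u v) -> provable G u v.

Definition t_strong (U : aclass) (B : finType) (u v : free U B) :=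
  forall G : pset U, (forall T, U T -> models G T -> sat T u v) -> provable G u v.

Section Restr.
Variables (U V : aclass) (sub : forall S, V S -> U S) (A : finType).

Lemma restr_nat (w : free U A) :
  natural (fun S (hS : V S) (f : A -> S) => fam w (sub hS) f).
Proof. move=> S T hS hT h hh f; exact: famP. Qed.

Definition restr (w : free U A) : free V A := Free (restr_nat w).
End Restr.

Definition pimage (U V : aclass) (sub : forall S, V S -> U S) (G : pset U) : pset V :=
  fun B p q => exists u v, G B u v /\ p = restr sub u /\ q = restr sub v.

End Defs.

(* Main.v *)
Require Import Defs.
From Stdlib Require Import FunctionalExtensionality PropExtensionality ProofIrrelevance ClassicalEpsilon Classical.
From mathcomp Require Import all_boot.


Section BW.
Variable D : Type.
Definition sset := (D -> Prop) -> Prop.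
Definition sle (G H : sset) := forall Y, G Y -> H Y.
Definition isPF (G : sset) :=
  [/\ G (fun _ => True), (forall Y Z, G Y -> G Z -> G (fun x => Y x /\ Z x)),
      (forall Y Z : D -> Prop, (forall x, Y x -> Z x) -> G Y -> G Z)
    & ~ G (fun _ => False)].
Variable F0 : sset.
Hypothesis F0pf : isPF F0.

Definition supc (C : sset -> Prop) : sset := fun Y => F0 Y \/ exists G, C G /\ G Y.

Definition gnext (G : sset) : sset :=
  match excluded_middle_informative
          (exists H, isPF H /\ sle G H /\ ~ sle H G) with
  | left e => proj1_sig (constructive_indefinite_description _ e)
  | right _ => G end.

Lemma sle_refl G : sle G G. Proof. by []. Qed.
Lemma sle_trans G H K : sle G H -> sle H K -> sle G K.
Proof. by move=> a b Y /a /b. Qed.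
Arguments sle_trans {G H K}.
Lemma sle_antisym G H : sle G H -> sle H G -> G = H.
Proof.
move=> a b; apply: functional_extensionality => Y.
apply: propositional_extensionality; split; [exact: a | exact: b].
Qed.
Arguments sle_antisym {G H}.

Lemma g_infl G : sle G (gnext G).
Proof.
rewrite /gnext; case: excluded_middle_informative => [e|_]; last exact: sle_refl.
by case: (constructive_indefinite_description _ e) => H /= [_ [hh _]].
Qed.

Lemma g_pf G : isPF G -> isPF (gnext G).
Proof.
rewrite /gnext; case: excluded_middle_informative => [e|_] //.
by case: (constructive_indefinite_description _ e) => H /= [hh _].
Qed.

Lemma g_max G : sle (gnext G) G -> forall H, isPF H -> sle G H -> sle H G.
Proof.
rewrite /gnext; case: excluded_middle_informative => [e|ne].
  case: (constructive_indefinite_description _ e) => H' /= [_ [_ nH]] hle; by [].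
move=> _ H pH GH; apply: NNPP => nHG; apply: ne; exists H; tauto.
Qed.

Definition chain (C : sset -> Prop) :=
  forall x y, C x -> C y -> sle x y \/ sle y x.
Definition adm (M : sset -> Prop) :=
  (forall x, M x -> M (gnext x)) /\
  (forall C, (forall x, C x -> M x) -> chain C -> M (supc C)).
Definition Tw (x : sset) := forall M, adm M -> M x.

Lemma T_adm : adm Tw.
Proof.
split; first by move=> x Tx M aM; apply: aM.1; apply: Tx.
move=> C CT cC M aM; apply: aM.2 => // x /CT; exact.
Qed.

Lemma T_sub M : adm M -> forall x, Tw x -> M x.
Proof. by move=> aM x Tx; apply: Tx. Qed.
Arguments T_sub {M} _ {x}.

Lemma supc_ub C x : C x -> sle x (supc C).
Proof. by move=> Cx Y xY; right; exists x. Qed.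
Arguments supc_ub {C x}.

Lemma supc_least C y : sle F0 y -> (forall x, C x -> sle x y) -> sle (supc C) y.
Proof. by move=> Fy Cy Y [/Fy|[x [/Cy xy /xy]]]. Qed.

Lemma T_F0 x : Tw x -> sle F0 x.
Proof.
move=> Tx; apply: (@T_sub (sle F0) _ x Tx); split.
  move=> y Fy; exact (sle_trans Fy (g_infl y)).
by move=> C _ _ Y FY; left.
Qed.

Definition extreme c := Tw c /\
  forall x, Tw x -> sle x c -> ~ sle c x -> sle (gnext x) c.

Definition Mc c x := Tw x /\ (sle x c \/ sle (gnext c) x).

Lemma lem1 c : extreme c -> adm (Mc c).
Proof.
move=> [Tc ec]; split.
  move=> x [Tx H]; split; first exact: T_adm.1 _ Tx.
  case: H => [xc|gcx].
  - case: (classic (sle c x)) => cx.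
      by have -> := sle_antisym xc cx; right; exact: sle_refl.
    by left; apply: ec.
  - by right; exact (sle_trans gcx (g_infl x)).
move=> C CM cC; split.
  by apply: T_adm.2 => // x /CM [].
case: (classic (exists x, C x /\ sle (gnext c) x)) => [[x [Cx gx]]|nx].
  by right; exact (sle_trans gx (supc_ub Cx)).
left; apply: supc_least; first exact: T_F0.
move=> x Cx; case: (CM x Cx) => _ [//|gx]; case: nx; by exists x.
Qed.

Arguments lem1 {c}.

Lemma lem2 : adm extreme.
Proof.
split.
  move=> c ce; have [Tc ec] := ce; split; first exact: T_adm.1.
  move=> x Tx xg ngx; case: (T_sub (lem1 ce) Tx) => _ [xc|//].
  case: (classic (sle c x)) => cx.
    by have -> := sle_antisym xc cx; exact: sle_refl.
  exact (sle_trans (ec x Tx xc cx) (g_infl c)).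
move=> C CE cC; split; first by apply: T_adm.2 => // x /CE [].
move=> x Tx xs nsx.
case: (classic (exists c, C c /\ ~ sle (gnext c) x)) => [[c [Cc ngc]]|nc]; last first.
  case: nsx; apply: supc_least; first exact: T_F0.
  move=> c Cc; apply (sle_trans (g_infl c)); apply: NNPP => h; apply: nc; by exists c.
have [Tc ec] := CE c Cc.
case: (T_sub (lem1 (CE c Cc)) Tx) => _ [xc|//].
case: (classic (sle c x)) => cx; last first.
  exact (sle_trans (ec x Tx xc cx) (supc_ub Cc)).
have exc := sle_antisym xc cx; subst x.
case: (classic (exists d, C d /\ ~ sle d c)) => [[d [Cd ndc]]|nd]; last first.
  case: nsx; apply: supc_least; first exact: T_F0.
  move=> d Cd; apply: NNPP => h; apply: nd; by exists d.
have cd : sle c d by case: (cC c d Cc Cd).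
have [Td ed] := CE d Cd.
exact (sle_trans (ed c Tc cd ndc) (supc_ub Cd)).
Qed.

Lemma T_chain : chain Tw.
Proof.
move=> x y Tx Ty; have ey := T_sub lem2 Ty.
case: (T_sub (lem1 ey) Tx) => _ [xy|gyx]; first by left.
by right; exact (sle_trans (g_infl y) gyx).
Qed.

Lemma supc_pf C : (forall x, C x -> isPF x /\ sle F0 x) -> chain C -> isPF (supc C).
Proof.
move=> CP cC; have [F1 F2 F3 F4] := F0pf; split.
- by left.
- move=> Y Z [FY|[G [CG GY]]] [FZ|[H [CH HZ]]].
  + by left; apply: F2.
  + have [[_ H2 _ _] FH] := CP H CH; right; exists H; split => //; apply: H2 => //; exact: FH.
  + have [[_ G2 _ _] FG] := CP G CG; right; exists G; split => //; apply: G2 => //; exact: FG.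
  + case: (cC G H CG CH) => [GH|HG].
      have [[_ H2 _ _] _] := CP H CH; right; exists H; split => //; apply: H2 => //; exact: GH.
    have [[_ G2 _ _] _] := CP G CG; right; exists G; split => //; apply: G2 => //; exact: HG.
- move=> Y Z YZ [FY|[G [CG GY]]]; first by left; apply: F3 YZ FY.
  have [[_ _ G3 _] _] := CP G CG; right; exists G; split => //; exact: G3 YZ GY.
- case=> [//|[G [CG G0]]]; have [[_ _ _ G4] _] := CP G CG; exact: G4.
Qed.

Lemma maxPF : exists G, sle F0 G /\ isPF G /\
  forall H, isPF H -> sle G H -> sle H G.
Proof.
have aP : adm (fun x => isPF x /\ sle F0 x).
  split; first by move=> x [px fx]; split; [exact: g_pf | exact (sle_trans fx (g_infl x))].
  move=> C CP cC; split; first exact: supc_pf.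
  by move=> Y FY; left.
set s := supc Tw.
have Ts : Tw s := proj2 T_adm Tw (fun x h => h) T_chain.
have gs : sle (gnext s) s := supc_ub (proj1 T_adm s Ts).
have [ps fs] := T_sub aP Ts.
exists s; split => //; split => //; exact: g_max.
Qed.

Lemma ultra : exists G, sle F0 G /\ isPF G /\
  forall Y, G Y \/ G (fun x => ~ Y x).
Proof.
have [G [FG [pG mG]]] := maxPF; exists G; split => //; split => //.
move=> Y; case: (classic (G Y)) => GY; first by left.
case: (classic (G (fun x => ~ Y x))) => GnY; first by right.
have [G1 G2 G3 G4] := pG.
pose H : sset := fun Z => exists Y', G Y' /\ forall x, Y x -> Y' x -> Z x.
have pH : isPF H.
  split.
  - by exists (fun _ => True).
  - move=> Z1 Z2 [Y1 [g1 h1]] [Y2 [g2 h2]]; exists (fun x => Y1 x /\ Y2 x).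
    split; first exact: G2. move=> x yx [a b]; split; [exact: h1 | exact: h2].
  - move=> Z1 Z2 h [Y1 [g1 h1]]; exists Y1; split => // x a b; apply: h; exact: h1.
  - move=> [Y1 [g1 h1]]; apply: GnY; apply: G3 g1 => x y1 yx; exact: h1 yx y1.
have GH : sle G H by move=> Z GZ; exists Z; split.
case: GY; apply: (mG H pH GH); exists (fun _ => True); split => //.
Qed.

End BW.
Arguments isPF {D}.
Arguments sle {D}.

Section Gen.
Variables (L : signature) (W : aclass L).

Lemma free_eq (A : finType) (w1 w2 : free W A) :
  (forall S (hS : W S) f, fam w1 hS f = fam w2 hS f) -> w1 = w2.
Proof.
case: w1 w2 => [f1 p1] [f2 p2] /= H.
have E : f1 = f2.
  apply: functional_extensionality_dep => S; apply: functional_extensionality => hS.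
  apply: functional_extensionality => f; exact: H.
subst f2; by rewrite (proof_irrelevance _ p1 p2).
Qed.
Arguments free_eq {A w1 w2}.

Lemma fam_irr (A : finType) (w : free W A) (S : alg L) (h1 h2 : W S) f :
  fam w h1 f = fam w h2 f.
Proof. exact: (@famP _ _ _ w S S h1 h2 id (fun o x => erefl) f). Qed.

Definition gen (A : finType) (a : A) : free W A :=
  @Free L W A (fun S _ f => f a) (fun S T hS hT h hh f => erefl).
Arguments gen {A}.

Definition Gen (A : finType) (z : free W A) :=
  forall P : free W A -> Prop, (forall a, P (gen a)) ->
  (forall o (zs : 'I_(arity o) -> free W A), (forall i, P (zs i)) -> P (freeop zs)) ->
  P z.
Arguments Gen {A}.

Lemma Gen_gen (A : finType) (a : A) : Gen (gen a).
Proof. by move=> P h1 h2; apply: h1. Qed.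

Lemma Gen_op (A : finType) o (zs : 'I_(arity o) -> free W A) :
  (forall i, Gen (zs i)) -> Gen (freeop zs).
Proof. move=> H P h1 h2; apply: (h2 o zs) => i; exact: (H i P h1 h2). Qed.

Lemma tval_teval (A : finType) (env : nat -> free W A) t (S : alg L) (hS : W S) f :
  fam (teval (@freeop L W A) env t) hS f =
  teval (@aop L S) (fun i => fam (env i) hS f) t.
Proof.
elim: t => [i|o ts IH] //=; rewrite /freeop_fam /=; congr (aop _).
apply: functional_extensionality => i; exact: IH.
Qed.

Variable G : pset W.

Lemma prov_gamma0 (A : finType) (p q : free W A) : gamma0 G p q -> provable G p q.
Proof. by move=> h R h1 h2 h3; apply: h1. Qed.
Arguments prov_gamma0 {A p q}.

Lemma prov_trans (A : finType) (p q r : free W A) :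
  provable G p q -> provable G q r -> provable G p r.
Proof. move=> h1 h2 R a b c; apply: (b _ q); [exact: h1 | exact: h2]. Qed.
Arguments prov_trans {A p q r}.

Lemma prov_closed (A : finType) (p q : free W A) :
  Defs.closure (@provable _ W G A) p q -> provable G p q.
Proof.
move=> h R a b c; apply: (c) => F; have [u' [v' [H1 [H2 H3]]]] := h F.
by exists u', v'; split => //; apply: (H1 R a b c).
Qed.
Arguments prov_closed {A p q}.

Lemma prov_sym (A : finType) (p q : free W A) : provable G p q -> provable G q p.
Proof.
move=> h; apply: (h (fun a b => provable G b a)).
- move=> a b [B [u [v [Huv rest]]]]; apply: prov_gamma0.
  exists B, v, u; split; first by case: Huv; [right|left].
  case: rest => phi [hp [cp [t [w [-> ->]]]]]; exists phi; split => //; split => //.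
  by exists t, w.
- move=> a b c h1 h2; exact: prov_trans h2 h1.
- move=> a b hc; apply: prov_closed => F; have [u' [v' [H1 [H2 H3]]]] := hc F.
  by exists v', u'.
Qed.
Arguments prov_sym {A p q}.


Lemma agree_app (A : finType) (F1 F2 : list (test W A)) (w w' : free W A) :
  agree F1 w w' -> agree F2 w w' -> agree (F1 ++ F2) w w'.
Proof. move=> h1 h2 t ht; case: (List.in_app_or _ _ _ ht) => H; [exact: h1 | exact: h2]. Qed.
Arguments agree_app {A F1 F2 w w'}.

Lemma agree_appl (A : finType) (F1 F2 : list (test W A)) (w w' : free W A) :
  agree (F1 ++ F2) w w' -> agree F1 w w'.
Proof. move=> h t ht; apply: h; apply: List.in_or_app; by left. Qed.
Arguments agree_appl {A F1 F2 w w'}.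

Lemma agree_appr (A : finType) (F1 F2 : list (test W A)) (w w' : free W A) :
  agree (F1 ++ F2) w w' -> agree F2 w w'.
Proof. move=> h t ht; apply: h; apply: List.in_or_app; by right. Qed.
Arguments agree_appr {A F1 F2 w w'}.

Lemma cont_list (B A : finType) (phi : free W B -> free W A) :
  cont_free phi -> forall w (F : list (test W A)), exists F1 : list (test W B),
  forall w', agree F1 w w' -> agree F (phi w) (phi w').
Proof.
move=> cp w; elim=> [|t F [F1 IH]]; first by exists nil => w' _ t [].
have [Ft Ht] := cp w t; exists (Ft ++ F1) => w' hw t' [<-|ht'].
  by apply: Ht; apply: agree_appl hw.
by apply: IH ht'; apply: agree_appr hw.
Qed.
Arguments cont_list {B A phi}.

Lemma teval_hom (X Y : Type) (opX : forall o : symb L, ('I_(arity o) -> X) -> X)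
  (opY : forall o : symb L, ('I_(arity o) -> Y) -> Y) (h : X -> Y) :
  ophom opX opY h -> forall env t, h (teval opX env t) = teval opY (h \o env) t.
Proof.
move=> hh env; elim=> [i|o ts IH] //=; rewrite hh; congr (opY o).
apply: functional_extensionality => i /=; exact: IH.
Qed.
Arguments teval_hom {X Y opX opY h}.

Lemma teval_ext (X : Type) (opX : forall o : symb L, ('I_(arity o) -> X) -> X)
  (env1 env2 : nat -> X) t : (forall i, env1 i = env2 i) ->
  teval opX env1 t = teval opX env2 t.
Proof. by move=> h; have -> : env1 = env2 by apply: functional_extensionality. Qed.
Arguments teval_ext {X opX env1 env2}.

Fixpoint tsubst (t : term L) (s : nat -> term L) : term L :=
  match t with Var i => s i | App o ts => App (fun i => tsubst (ts i) s) end.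

Lemma teval_subst (X : Type) (opX : forall o : symb L, ('I_(arity o) -> X) -> X)
  env t s : teval opX env (tsubst t s) = teval opX (fun i => teval opX env (s i)) t.
Proof.
elim: t => [i|o ts IH] //=; congr (opX o); apply: functional_extensionality => i.
exact: IH.
Qed.

Lemma hom_comp (B C A : finType) (psi : free W B -> free W C) (phi : free W C -> free W A) :
  ophom (@freeop _ W B) (@freeop _ W C) psi -> ophom (@freeop _ W C) (@freeop _ W A) phi ->
  ophom (@freeop _ W B) (@freeop _ W A) (phi \o psi).
Proof. by move=> h1 h2 o x /=; rewrite h1 h2. Qed.
Arguments hom_comp {B C A psi phi}.

Lemma cont_comp (B C A : finType) (psi : free W B -> free W C) (phi : free W C -> free W A) :
  cont_free psi -> cont_free phi -> cont_free (phi \o psi).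
Proof.
move=> c1 c2 w t; have [F HF] := c2 (psi w) t; have [F1 H1] := cont_list c1 w F.
exists F1 => w' /H1 h; exact: HF.
Qed.
Arguments cont_comp {B C A psi phi}.

Lemma prov_subst (B A : finType) (phi : free W B -> free W A) :
  ophom (@freeop _ W B) (@freeop _ W A) phi -> cont_free phi ->
  forall u v, provable G u v -> provable G (phi u) (phi v).
Proof.
move=> hp cp u v P; apply: (P (fun a b => provable G (phi a) (phi b))).
- move=> a b [B1 [u1 [v1 [Huv [psi [hpsi [cpsi [t [w [-> ->]]]]]]]]]].
  apply: prov_gamma0; exists B1, u1, v1; split => //.
  exists (phi \o psi); split; first exact: hom_comp.
  split; first exact: cont_comp.
  exists t, (phi \o w); rewrite !(teval_hom hp); split; apply: teval_ext => -[|i] //.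
- move=> a b c; exact: prov_trans.
- move=> a b hc; apply: prov_closed => F.
  have [Fa Ha] := cont_list cp a F; have [Fb Hb] := cont_list cp b F.
  have [a' [b' [H1 [H2 H3]]]] := hc (Fa ++ Fb).
  exists (phi a'), (phi b'); split => //; split.
    by apply: Ha; apply: agree_appl H2.
  by apply: Hb; apply: agree_appr H3.
Qed.
Arguments prov_subst {B A phi}.

Definition w2of (A : Type) (w1 w : nat -> A) (k : nat) : A :=
  if odd k then w k./2 else w1 k./2.
Arguments w2of {A}.

Definition t2of (t1 t : term L) : term L :=
  tsubst t (ecase (tsubst t1 (ecase (Var L 0) (fun j => Var L j.*2.+1)))
                  (fun j => Var L j.*2.+2)).

Lemma ctx_comb (X : Type) (opX : forall o : symb L, ('I_(arity o) -> X) -> X)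
  (x : X) w1 w t1 t :
  teval opX (ecase (teval opX (ecase x w1) t1) w) t =
  teval opX (ecase x (w2of w1 w)) (t2of t1 t).
Proof.
rewrite /t2of teval_subst; apply: teval_ext => -[|j] /=.
  rewrite teval_subst; apply: teval_ext => -[|i] //=.
  by rewrite /w2of odd_double doubleK.
by rewrite /w2of /= odd_double /= uphalf_double.
Qed.

Lemma prov_ctx (A : finType) (a b : free W A) : provable G a b ->
  forall t w, provable G (teval (@freeop _ W A) (ecase a w) t)
                         (teval (@freeop _ W A) (ecase b w) t).
Proof.
move=> P; apply: (P (fun a b => forall t w, provable G (teval (@freeop _ W A) (ecase a w) t)
                         (teval (@freeop _ W A) (ecase b w) t))).
- move=> p q [B1 [u1 [v1 [Huv [phi [hphi [cphi [t1 [w1 [-> ->]]]]]]]]]] t w.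
  apply: prov_gamma0; exists B1, u1, v1; split => //.
  exists phi; split => //; split => //.
  exists (t2of t1 t), (w2of w1 w); split; exact: ctx_comb.
- move=> p q r h1 h2 t w; exact: prov_trans (h1 t w) (h2 t w).
- move=> p q hc t w; apply: prov_closed => F.
  have [p' [q' [H1 [H2 H3]]]] := hc F.
  exists (teval (@freeop _ W A) (ecase p' w) t), (teval (@freeop _ W A) (ecase q' w) t).
  split; first exact: H1.
  split => tt htt; rewrite /Defs.tval !tval_teval; apply: teval_ext => -[|i] //=; first [exact: (H2 tt htt) | exact: (H3 tt htt)].
Qed.
Arguments prov_ctx {A a b}.

End Gen.
Arguments gen {L W A}.
Arguments Gen {L W A}.
Arguments Gen_gen {L W A}.
Arguments Gen_op {L W A o zs}.
Arguments tsubst {L}.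
Section Dens.
Variables (L : signature) (W : aclass L).
Hypothesis pW : pseudovariety W.

Lemma prod_tests (B : finType) (F : list (test W B)) :
  exists (P : alg L) (hP : W P) (fP : B -> P), forall t, List.In t F ->
    exists h : P -> tS t, is_hom h /\ forall b, h (fP b) = tf t b.
Proof.
case: pW => _ _ _ pprod punit.
elim: F => [|t F [P [hP [fP IH]]]].
  by exists (unit_alg L), punit, (fun _ => tt) => t [].
exists (prod_alg (tS t) P), (pprod _ _ (tU t) hP), (fun b => (tf t b, fP b)).
move=> t' [<-|ht'].
  by exists fst; split.
have [h [hh hf]] := IH t' ht'.
exists (h \o snd); split; last by move=> b /=; exact: hf.
by move=> o x /=; rewrite hh.
Qed.
Arguments prod_tests {B}.

Section Sub.
Variables (P : alg L) (B : Type) (fP : B -> P).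
Definition GenS (x : P) := forall Q : P -> Prop, (forall b, Q (fP b)) ->
  (forall (o : symb L) (xs : 'I_(arity o) -> P), (forall i, Q (xs i)) -> Q (@aop L P o xs)) -> Q x.
Definition genb (x : P) : bool :=
  if excluded_middle_informative (GenS x) then true else false.
Lemma genbP x : genb x -> GenS x.
Proof. by rewrite /genb; case: excluded_middle_informative. Qed.
Lemma genbP' x : GenS x -> genb x.
Proof. by rewrite /genb; case: excluded_middle_informative. Qed.
Definition subC : finType := {x : P | genb x}.
Lemma sub_op_proof o (xs : 'I_(arity o) -> subC) : genb (@aop L P o (fun i => val (xs i))).
Proof.
apply: genbP' => Q h1 h2; apply: (h2) => i; exact: (genbP _ (valP (xs i)) Q h1 h2).
Qed.
Definition subA : alg L :=
  @Alg L subC (fun o xs => exist _ (@aop L P o (fun i => val (xs i))) (sub_op_proof o xs)).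
Lemma val_hom : @is_hom L subA P (fun x : subA => val x).
Proof. by []. Qed.
Lemma fS_proof b : genb (fP b).
Proof. by apply: genbP' => Q h1 h2; apply: h1. Qed.
Definition fS (b : B) : subA := exist _ (fP b) (fS_proof b).
End Sub.
Arguments subA {P B}.
Arguments fS {P B}.
Arguments val_hom {P B}.
Arguments GenS {P B}.
Arguments genbP {P B fP x}.
Arguments genbP' {P B fP x}.

Lemma density (B : finType) (y : free W B) (F : list (test W B)) :
  exists y0, Gen y0 /\ agree F y y0.
Proof.
have [P [hP [fP Hp]]] := prod_tests F.
have hS : W (subA fP).
  case: pW => _ _ psub _ _; apply: (psub P (subA fP) (fun x => val x)) => //.
  move=> [a pa] [b pb] /= e; subst b; by rewrite (proof_irrelevance _ pa pb).
have gy : GenS fP (fam y hP fP).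
  have e : val (fam y hS (fS fP)) = fam y hP fP := famP y hS hP (val_hom fP) (fS fP).
  rewrite -e; apply: genbP; exact: valP.
have [z [Gz ez]] : exists z, Gen z /\ fam z hP fP = fam y hP fP.
  move: gy; move: (fam y hP fP) => s gs.
  apply: (gs (fun s => exists z, Gen z /\ fam z hP fP = s)).
    by move=> b; exists (gen b); split => //; exact: Gen_gen.
  move=> o xs IH.
  pose zs i := proj1_sig (constructive_indefinite_description _ (IH i)).
  have hz i : Gen (zs i) /\ fam (zs i) hP fP = xs i.
    rewrite /zs; by case: constructive_indefinite_description.
  exists (freeop zs); split; first by apply: Gen_op => i; case: (hz i).
  rewrite /= /freeop_fam; congr aop; apply: functional_extensionality => i.
  by case: (hz i).
exists z; split => // t ht; have [h [hh hf]] := Hp t ht; rewrite /Defs.tval.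
have etf : tf t = h \o fP by apply: functional_extensionality => b; rewrite /= hf.
by rewrite etf -!(famP _ hP (tU t) hh) ez.
Qed.
Arguments density {B}.

Lemma cont_hom_eval (B : finType) (T : alg L) (hT : W T) (g : free W B -> T) :
  ophom (@freeop _ W B) (@aop _ T) g -> cont_alg g ->
  forall y, g y = fam y hT (fun b => g (gen b)).
Proof.
move=> hg cg y; have [F HF] := cg y.
have [y0 [Gy0 Ay]] := density y (Test hT (fun b => g (gen b)) :: F).
have e1 : g y0 = g y.
  by apply: HF => t ht; apply: Ay; right.
have e2 : g y0 = fam y0 hT (fun b => g (gen b)).
  apply: (Gy0 (fun z => g z = fam z hT (fun b => g (gen b)))) => // o zs IH.
  rewrite hg /= /freeop_fam; congr aop; apply: functional_extensionality => i.
  exact: IH.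
have e3 : fam y0 hT (fun b => g (gen b)) = fam y hT (fun b => g (gen b)).
  exact: (Ay (Test hT (fun b => g (gen b))) (or_introl erefl)).
by rewrite -e1 e2 e3.
Qed.

End Dens.
Section UF.
Variable D : Type.
Variable UF : sset D.
Hypothesis pUF : isPF UF.
Hypothesis uUF : forall Y, UF Y \/ UF (fun x => ~ Y x).

Lemma uf_sup (Y Z : D -> Prop) : (forall x, Y x -> Z x) -> UF Y -> UF Z.
Proof. by case: pUF => _ _ h _; apply: h. Qed.
Arguments uf_sup {Y Z}.

Lemma uf_and (Y Z : D -> Prop) : UF Y -> UF Z -> UF (fun x => Y x /\ Z x).
Proof. by case: pUF => _ h _ _; apply: h. Qed.
Arguments uf_and {Y Z}.

Lemma uf_ne (Y : D -> Prop) : UF Y -> exists x, Y x.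
Proof.
move=> h; apply: NNPP => nx; case: pUF => _ _ _ h4; apply: h4.
by apply: uf_sup h => x Yx; apply: nx; exists x.
Qed.
Arguments uf_ne {Y}.

Lemma uf_list (T : Type) (l : list T) (P : T -> D -> Prop) :
  (forall t, List.In t l -> UF (P t)) -> UF (fun x => forall t, List.In t l -> P t x).
Proof.
elim: l => [|a l IH] H.
  by case: pUF => h1 _ _ _; apply: uf_sup h1 => x _ t [].
have h1 := H a (or_introl erefl).
have h2 := IH (fun t ht => H t (or_intror ht)).
by apply: uf_sup (uf_and h1 h2) => x [p1 p2] t [<-|/p2].
Qed.

Lemma uf_seq (T : eqType) (l : seq T) (P : T -> D -> Prop) :
  (forall t, t \in l -> UF (P t)) -> UF (fun x => forall t, t \in l -> P t x).
Proof.
elim: l => [|a l IH] H.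
  by case: pUF => h1 _ _ _; apply: uf_sup h1 => x _ t.
have h1 := H a (mem_head _ _).
have h2 := IH (fun t ht => H t (@mem_behead _ (a :: l) t ht)).
apply: uf_sup (uf_and h1 h2) => x [p1 p2] t; rewrite in_cons => /orP [/eqP ->|/p2] //.
Qed.

Lemma uf_lim (S : finType) (v : D -> S) : exists s, UF (fun x => v x = s).
Proof.
apply: NNPP => H.
have h s : UF (fun x => ~ v x = s).
  by case: (uUF (fun x => v x = s)) => // h; case: H; exists s.
have := @uf_seq S (enum S) (fun s x => ~ v x = s) (fun s _ => h s).
move/uf_ne => [x Hx]; apply: (Hx (v x)) => //; by rewrite mem_enum.
Qed.

Lemma uf_uniq (S : Type) (v : D -> S) s1 s2 :
  UF (fun x => v x = s1) -> UF (fun x => v x = s2) -> s1 = s2.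
Proof. by move=> h1 h2; have [x [<- <-]] := uf_ne (uf_and h1 h2). Qed.

Definition ulim (S : finType) (v : D -> S) : S :=
  proj1_sig (constructive_indefinite_description _ (@uf_lim S v)).
Arguments ulim {S}.

Lemma ulimP (S : finType) (v : D -> S) : UF (fun x => v x = ulim v).
Proof. by rewrite /ulim; case: constructive_indefinite_description. Qed.

Lemma ulim_uniq (S : finType) (v : D -> S) s : UF (fun x => v x = s) -> s = ulim v.
Proof. move=> h; exact: (@uf_uniq S v s (ulim v) h (@ulimP S v)). Qed.
End UF.
Arguments free_eq {L W A w1 w2}.
Arguments fam_irr {L W A} w {S} h1 h2 f.
Arguments prov_gamma0 {L W G A p q}.
Arguments prov_trans {L W G A p q r}.
Arguments prov_closed {L W G A p q}.
Arguments prov_sym {L W G A p q}.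
Arguments prov_subst {L W G B A phi} _ _ {u v}.
Arguments prov_ctx {L W G A a b}.
Arguments teval_hom {L X Y opX opY h}.
Arguments teval_ext {L X opX env1 env2}.
Arguments cont_hom_eval {L W} pW {B T} hT {g}.
Arguments density {L W} pW {B}.
Arguments ultra {D F0}.
Arguments ulim {D UF} pUF uUF {S}.
Arguments ulimP {D UF} pUF uUF {S}.
Arguments ulim_uniq {D UF} pUF uUF {S v s}.
Arguments uf_sup {D UF} pUF {Y Z}.
Arguments uf_and {D UF} pUF {Y Z}.
Arguments uf_ne {D UF} pUF {Y}.
Arguments uf_list {D UF} pUF {T} l {P}.

Section Restr2.
Variables (L : signature) (U V : aclass L) (sub : forall S, V S -> U S).
Hypothesis hV : pseudovariety V.

Lemma restr_hom (A : finType) :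
  ophom (@freeop _ U A) (@freeop _ V A) (fun w => restr sub w).
Proof. by move=> o x; apply: free_eq. Qed.

Lemma Gen_lift (A : finType) (z : free V A) : Gen z -> exists z', restr sub z' = z.
Proof.
move=> Gz; apply: (Gz (fun z => exists z', restr sub z' = z)).
  by move=> a; exists (gen a); apply: free_eq.
move=> o zs IH.
pose zs' i := proj1_sig (constructive_indefinite_description _ (IH i)).
have hz i : restr sub (zs' i) = zs i.
  by rewrite /zs'; case: constructive_indefinite_description.
exists (freeop zs'); rewrite (restr_hom A o zs'); congr freeop.
by apply: functional_extensionality => i /=.
Qed.

Lemma Klem (A : finType) (C : free U A -> free U A -> Prop) :
  (forall a b, Defs.closure C a b -> C a b) -> forall p q : free V A,
  (forall F : list (test V A), exists a b, C a b /\
     agree F p (restr sub a) /\ agree F q (restr sub b)) ->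
  exists a b, C a b /\ restr sub a = p /\ restr sub b = q.
Proof.
move=> cC p q H.
pose D := list (test V A).
have H' : forall F : D, {ab : free U A * free U A | C ab.1 ab.2 /\
     agree F p (restr sub ab.1) /\ agree F q (restr sub ab.2)}.
  move=> F; apply: constructive_indefinite_description.
  by have [a [b h]] := H F; exists (a, b).
pose ab F := proj1_sig (H' F).
have abP F : C (ab F).1 (ab F).2 /\
     agree F p (restr sub (ab F).1) /\ agree F q (restr sub (ab F).2).
  by rewrite /ab; case: (H' F).
pose F0 : sset D := fun Y => exists l : D, forall F : D,
  (forall t, List.In t l -> List.In t F) -> Y F.
have pF0 : isPF F0.
  split.
  - by exists nil.
  - move=> Y Z [l1 h1] [l2 h2]; exists (l1 ++ l2) => F hF; split.
      by apply: h1 => t ht; apply: hF; apply: List.in_or_app; left.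
    by apply: h2 => t ht; apply: hF; apply: List.in_or_app; right.
  - by move=> Y Z YZ [l h]; exists l => F hF; apply: YZ; exact: h.
  - by move=> [l h]; exact: (h l (fun t ht => ht)).
have [UF [sF [pUF uUF]]] := ultra pF0.
have natw : forall w : D -> free U A,
    natural (fun S hS f => ulim pUF uUF (fun F => fam (w F) hS f)).
  move=> w S T hS hT h hh f; apply: ulim_uniq.
  apply: (uf_sup pUF _ (ulimP pUF uUF (fun F => fam (w F) hS f))) => F /= e.
  by rewrite -(famP (w F) hS hT hh) e.
pose lw w := Free (natw w).
have lw_agree : forall w (l : list (test U A)), UF (fun F => agree l (lw w) (w F)).
  move=> w l.
  have h0 : forall t, List.In t l -> UF (fun F => Defs.tval (w F) t = Defs.tval (lw w) t).
    by move=> t _; exact: (ulimP pUF uUF (fun F => fam (w F) (tU t) (tf t))).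
  exact: (uf_sup pUF (fun F h => h) (uf_list pUF l h0)).
have lw_restr : forall w (r : free V A), (forall F, agree F r (restr sub (w F))) ->
    restr sub (lw w) = r.
  move=> w r hw; apply: free_eq => S hS f /=; symmetry; apply: ulim_uniq.
  apply: sF; exists [:: Test hS f] => F hF.
  exact: (hw F (Test hS f) (hF _ (or_introl erefl))).
exists (lw (fun F => (ab F).1)), (lw (fun F => (ab F).2)); split.
  apply: cC => l.
  have [F [h1 h2]] := uf_ne pUF (uf_and pUF (lw_agree (fun F => (ab F).1) l)
                                         (lw_agree (fun F => (ab F).2) l)).
  exists (ab F).1, (ab F).2; split; first by case: (abP F).
  by split.
split; apply: lw_restr => F; by case: (abP F) => _ [].
Qed.

Lemma lift (A : finType) (w : free V A) : exists w', restr sub w' = w.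
Proof.
have [a [b [_ [ea _]]]] : exists a b, True /\ restr sub a = w /\ restr sub b = w.
  apply: (@Klem A (fun _ _ => True)) => // F.
  have [w0 [Gw0 aw]] := density hV w F.
  have [w' ew] := Gen_lift _ _ Gw0.
  by exists w', w'; rewrite ew; split => //; split.
by exists a.
Qed.

End Restr2.
Section Main.
Variables (L : signature) (U V : aclass L).
Hypotheses (hU : pseudovariety U) (hV : pseudovariety V).
Variable sub : forall S, V S -> U S.
Variable Sigma : pset U.
Hypothesis hSigma : forall T, V T <-> (U T /\ models Sigma T).
Hypothesis hSh : h_strong Sigma.
Hypothesis hSt : forall (B : finType) (u v : free U B), Sigma B u v -> t_strong u v.
Variable Gamma : pset U.
Hypothesis hGamma : forall T, U T -> models Gamma T -> V T.
Hypothesis hGamma' : h_strong (pimage sub Gamma).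

Lemma fsubst_nat (B A : finType) (g : B -> free U A) (z : free U B) :
  natural (fun S (hS : U S) (f : A -> S) => fam z hS (fun b => fam (g b) hS f)).
Proof.
move=> S T hS hT h hh f /=; rewrite (famP z hS hT hh); congr (fam z hT).
apply: functional_extensionality => b /=; exact: (famP (g b) hS hT hh f).
Qed.

Definition fsubst (B A : finType) (g : B -> free U A) (z : free U B) : free U A :=
  Free (@fsubst_nat B A g z).
Arguments fsubst {B A}.

Lemma fsubst_hom (B A : finType) (g : B -> free U A) :
  ophom (@freeop _ U B) (@freeop _ U A) (fsubst g).
Proof. by move=> o x; apply: free_eq. Qed.
Arguments fsubst_hom {B A}.

Lemma fsubst_cont (B A : finType) (g : B -> free U A) : cont_free (fsubst g).
Proof.
move=> w t; exists [:: Test (tU t) (fun b => Defs.tval (g b) t)] => w' ag.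
exact: (ag _ (or_introl erefl)).
Qed.
Arguments fsubst_cont {B A}.

Lemma restr_fsubst (B A : finType) (g : B -> free U A) (phi : free V B -> free V A) :
  ophom (@freeop _ V B) (@freeop _ V A) phi -> cont_free phi ->
  (forall b, restr sub (g b) = phi (gen b)) ->
  forall z, restr sub (fsubst g z) = phi (restr sub z).
Proof.
move=> hphi cphi hg z; apply: free_eq => S hS f /=.
pose ev := fun y => fam (phi y) hS f.
have hev : ophom (@freeop _ V B) (@aop _ S) ev.
  by move=> o x; rewrite /ev hphi.
have cev : cont_alg ev.
  by move=> y; have [F HF] := cphi y (Test hS f); exists F => y' /HF.
have := cont_hom_eval hV hS hev cev (restr sub z); rewrite /ev => ->.
congr (fam z (sub _ hS)); apply: functional_extensionality => b.
by rewrite -hg.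
Qed.
Arguments restr_fsubst {B A g phi}.

Lemma sig_prov (B : finType) (u v : free U B) : Sigma B u v -> provable Gamma u v.
Proof.
move=> h; apply: (hSt _ _ _ h Gamma) => T hT mT.
have hVT := hGamma _ hT mT.
by have [_ mS] := (hSigma T).1 hVT; exact: (mS _ _ _ h).
Qed.
Arguments sig_prov {B u v}.

Lemma ker_prov (A : finType) (p q : free U A) :
  restr sub p = restr sub q -> provable Gamma p q.
Proof.
move=> e.
have P : provable Sigma p q.
  apply: hSh => T hT mT g hg cg.
  have hVT : V T := (hSigma T).2 (conj hT mT).
  rewrite !(cont_hom_eval hU hT hg cg) !(fam_irr _ hT (sub _ hVT)).
  change (fam (restr sub p) hVT (fun b => g (gen b)) =
          fam (restr sub q) hVT (fun b => g (gen b))).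
  by rewrite e.
apply: (P (fun a b => provable Gamma a b)).
- move=> a b [B [u [v [Huv [phi [hphi [cphi [t [w [-> ->]]]]]]]]]].
  have Puv : provable Gamma u v.
    by case: Huv => h; [exact: sig_prov | apply: prov_sym; exact: sig_prov].
  exact: (prov_ctx (prov_subst hphi cphi Puv) t w).
- by move=> a b c; apply: prov_trans.
- by move=> a b; apply: prov_closed.
Qed.
Arguments ker_prov {A p q}.

Lemma RV_main (A : finType) (p q : free V A) : provable (pimage sub Gamma) p q ->
  forall p' q', restr sub p' = p -> restr sub q' = q -> provable Gamma p' q'.
Proof.
move=> P.
apply: (P (fun p q => forall p' q', restr sub p' = p -> restr sub q' = q ->
                                     provable Gamma p' q')).
- move=> p0 q0 [B [u0 [v0 [Huv [phi [hphi [cphi [t [w [-> ->]]]]]]]]]] p' q' ep eq.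
  have [u1 [v1 [G1 [eu ev]]]] : exists u1 v1, (Gamma B u1 v1 \/ Gamma B v1 u1) /\
      restr sub u1 = u0 /\ restr sub v1 = v0.
    case: Huv => [[u1 [v1 [G1 [-> ->]]]]|[v1 [u1 [G1 [-> ->]]]]].
      by exists u1, v1; split => //; left.
    by exists u1, v1; split => //; right.
  have gl b : {x : free U A | restr sub x = phi (gen b)}.
    by apply: constructive_indefinite_description; apply: lift.
  pose g b := proj1_sig (gl b).
  have hg b : restr sub (g b) = phi (gen b) by rewrite /g; case: (gl b).
  have wl j : {x : free U A | restr sub x = w j}.
    by apply: constructive_indefinite_description; apply: lift.
  pose w' j := proj1_sig (wl j).
  have hw j : restr sub (w' j) = w j by rewrite /w'; case: (wl j).
  have key : forall x0 y0, restr sub x0 = y0 ->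
      restr sub (teval (@freeop _ U A) (ecase (fsubst g x0) w') t) =
      teval (@freeop _ V A) (ecase (phi y0) w) t.
    move=> x0 y0 <-; rewrite (teval_hom (restr_hom _ _ _ sub A)).
    apply: teval_ext => -[|j] /=; last exact: hw.
    exact: restr_fsubst.
  have e1 : provable Gamma p' (teval (@freeop _ U A) (ecase (fsubst g u1) w') t).
    by apply: ker_prov; rewrite ep (key _ _ eu).
  have e2 : provable Gamma (teval (@freeop _ U A) (ecase (fsubst g v1) w') t) q'.
    by apply: ker_prov; rewrite eq (key _ _ ev).
  have e3 : provable Gamma (teval (@freeop _ U A) (ecase (fsubst g u1) w') t)
                           (teval (@freeop _ U A) (ecase (fsubst g v1) w') t).
    apply: prov_gamma0; exists B, u1, v1; split => //.
    exists (fsubst g); split; first exact: fsubst_hom.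
    split; first exact: fsubst_cont.
    by exists t, w'.
  exact: prov_trans e1 (prov_trans e3 e2).
- move=> a b c h1 h2 p' r' ep er.
  have [q' eq] := lift _ _ _ sub hV _ b.
  exact: prov_trans (h1 p' q' ep eq) (h2 q' r' eq er).
- move=> a b hc p' q' ep eq.
  have H : forall F : list (test V A), exists a0 b0, provable Gamma a0 b0 /\
      agree F a (restr sub a0) /\ agree F b (restr sub b0).
    move=> F; have [u' [v' [R1 [ag1 ag2]]]] := hc F.
    have [a' ea'] := lift _ _ _ sub hV _ u'.
    have [b' eb'] := lift _ _ _ sub hV _ v'.
    exists a', b'; split; first exact: R1.
    by rewrite ea' eb'.
  have [a4 [b4 [P4 [ea eb]]]] := Klem _ _ _ sub A (fun x y => provable Gamma x y)
     (fun x y h => prov_closed h) a b H.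
  have e1 : provable Gamma p' a4 by apply: ker_prov; rewrite ep ea.
  have e2 : provable Gamma b4 q' by apply: ker_prov; rewrite eq eb.
  exact: prov_trans e1 (prov_trans P4 e2).
Qed.

Lemma final : h_strong Gamma.
Proof.
move=> B u v Hv.
have Pv : provable (pimage sub Gamma) (restr sub u) (restr sub v).
  apply: hGamma' => T hT mT g hg cg.
  pose g' := fun y : free U B => g (restr sub y).
  have hg' : ophom (@freeop _ U B) (@aop _ T) g'.
    by move=> o x; rewrite /g' (restr_hom _ _ _ sub B o x) hg.
  have cg' : cont_alg g'.
    move=> y; have [F HF] := cg (restr sub y).
    exists (List.map (fun t : test V B => Test (sub _ (tU t)) (tf t)) F) => y' ag.
    apply: HF => t ht; exact: (ag _ (List.in_map _ _ _ ht)).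
  have mG : models Gamma T.
    move=> B1 u1 v1 G1 h hh ch.
    rewrite (cont_hom_eval hU (sub _ hT) hh ch u1) (cont_hom_eval hU (sub _ hT) hh ch v1).
    change (fam (restr sub u1) hT (fun b => h (gen b)) =
            fam (restr sub v1) hT (fun b => h (gen b))).
    have S1 := mT B1 (restr sub u1) (restr sub v1)
      (ex_intro _ u1 (ex_intro _ v1 (conj G1 (conj erefl erefl)))).
    apply: (S1 (fun z => fam z hT (fun b => h (gen b)))).
      by move=> o x.
    move=> y; exists [:: Test hT (fun b => h (gen b))] => y' ag.
    exact: (ag _ (or_introl erefl)).
  exact: (Hv T (sub _ hT) mG g' hg' cg').
exact: (RV_main _ _ _ Pv u v erefl erefl).
Qed.

End Main.

Theorem proposition4p2 (L : signature) (U V : aclass L)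
  (hU : pseudovariety U) (hV : pseudovariety V)
  (sub : forall S, V S -> U S)
  (Sigma : pset U)
  (hSigma : forall T, V T <-> (U T /\ models Sigma T))
  (hSh : h_strong Sigma)
  (hSt : forall (B : finType) (u v : free U B), Sigma B u v -> t_strong u v)
  (Gamma : pset U)
  (hGamma : forall T, U T -> models Gamma T -> V T)
  (hGamma' : h_strong (pimage sub Gamma)) :
  h_strong Gamma.
Proof. exact: (final L U V hU hV sub Sigma hSigma hSh hSt Gamma hGamma hGamma'). Qed.
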